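(* Let $(X,\Sigma)$ be a measurable space, $p$ a transition function on it with associated operator $A$ on $ba(X,\Sigma)$, and let $K=\{\mu_1,\dots,\mu_m\}$ be a finitely additive cycle of measures of $A$. Then $K$ is countably additive (i.e. all $\mu_i$ are countably additive) if and only if its mean measure $\frac1m\sum_{k=1}^m\mu_k$ is countably additive.
   Context: $X$ is an arbitrary infinite set and $\Sigma$ a $\sigma$-algebra of subsets of $X$ containing all one-point sets. $ba(X,\Sigma)$ denotes the space of bounded finitely additive real-valued measures on $\Sigma$. A transition function is a map $p(x,E)$ with $0\le p(x,E)\le1$, $p(x,X)=1$, $p(\cdot,E)$ bounded $\Sigma$-measurable for every $E\in\Sigma$, and $p(x,\cdot)$ countably additive for every $x\in X$. The Markov operator is $A\mu(E)=\int_X p(x,E)\,\mu(dx)$. A cycle of measures of $A$ is a finite numbered set $\{\mu_1,\dots,\mu_m\}$ of pairwise different positive finitely additive measures with $A\mu_i=\mu_{i+1}$ ($1\le i\le m-1$), $A\mu_m=\mu_1$; its mean measure is $\frac1m\sum_k\mu_k$. *)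

(* Defs.v *)
From HB Require Import structures.
From mathcomp Require Import all_boot all_order all_algebra.
From mathcomp Require Import all_classical all_reals all_analysis.
Set Implicit Arguments. Unset Strict Implicit. Unset Printing Implicit Defensive.
Import Order.TTheory GRing.Theory Num.Theory.
Import numFieldNormedType.Exports.
Local Open Scope classical_set_scope.
Local Open Scope ring_scope.

Section Defs.
Context {d : measure_display} {X : measurableType d} {R : realType}.

(* finitely additive (real-valued, hence bounded when positive) measure on Sigma *)
Definition fin_additive (mu : set X -> R) : Prop :=
  mu set0 = 0 /\
  forall A B, measurable A -> measurable B -> A `&` B = set0 ->
    mu (A `|` B) = mu A + mu B.

Definition positive_measure (mu : set X -> R) : Prop :=
  forall A, measurable A -> 0 <= mu A.

Definition count_additive (mu : set X -> R) : Prop :=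
  forall F : nat -> set X, (forall n, measurable (F n)) -> trivIset setT F ->
    (fun n => \sum_(k < n) mu (F k)) @ \oo --> mu (\bigcup_k F k).

Definition transition_function (p : X -> set X -> R) : Prop :=
  (forall x E, measurable E -> 0 <= p x E <= 1) /\
  (forall x, p x setT = 1) /\
  (forall E, measurable E -> measurable_fun setT (fun x => p x E)) /\
  (forall x, count_additive (p x)).

(* [fa_integral_is mu f I]: I is the integral of the bounded measurable
   function f against the bounded finitely additive measure mu, defined as
   the limit of Riemann-Stieltjes sums over finite measurable partitions of X
   on whose cells f oscillates less than delta, as delta -> 0. *)
Definition fa_integral_is (mu : set X -> R) (f : X -> R) (I : R) : Prop :=
  forall eps : R, 0 < eps -> exists2 delta : R, 0 < delta &
    forall (n : nat) (E : 'I_n -> set X) (x : 'I_n -> X),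
      (forall j, measurable (E j)) ->
      (forall j k, j != k -> E j `&` E k = set0) ->
      (forall y, exists j, E j y) ->
      (forall j, E j (x j)) ->
      (forall j y z, E j y -> E j z -> `|f y - f z| < delta) ->
      `| \sum_(j < n) f (x j) * mu (E j) - I | < eps.

(* [markov_image p mu nu] : nu = A mu, i.e. nu E = \int p(x,E) mu(dx) for all E in Sigma *)
Definition markov_image (p : X -> set X -> R) (mu nu : set X -> R) : Prop :=
  forall E, measurable E -> fa_integral_is mu (fun x => p x E) (nu E).

Definition measure_cycle (p : X -> set X -> R) (m : nat) (mu : 'I_m -> set X -> R) : Prop :=
  (0 < m)%N /\
  (forall i, fin_additive (mu i) /\ positive_measure (mu i)) /\
  (forall i j, i != j -> exists2 E, measurable E & mu i E <> mu j E) /\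
  (forall i j : 'I_m, val j = ((val i).+1 %% m)%N -> markov_image p (mu i) (mu j)).

Definition mean_measure (m : nat) (mu : 'I_m -> set X -> R) : set X -> R :=
  fun E => (m%:R)^-1 * \sum_(k < m) mu k E.

End Defs.

(* Main.v *)
Require Import Defs.
From HB Require Import structures.
From mathcomp Require Import all_boot all_order all_algebra.
From mathcomp Require Import all_classical all_reals all_analysis.
Import Order.TTheory GRing.Theory Num.Theory.
Import numFieldNormedType.Exports.
Local Open Scope classical_set_scope.
Local Open Scope ring_scope.

Lemma fa_bigU (d : measure_display) (X : measurableType d) (R : realType)
  (mu : set X -> R) (hfa : fin_additive mu) (F : nat -> set X)
  (mF : forall n, measurable (F n)) (tF : trivIset setT F) (n : nat) :
  mu (\big[setU/set0]_(k < n) F k) = \sum_(k < n) mu (F k).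
Proof.
elim: n => [|n IH]; first by rewrite !big_ord0 hfa.1.
rewrite !big_ord_recr /= hfa.2 ?IH //.
- exact: bigsetU_measurable.
- rewrite -bigcup_mkord; apply/seteqP; split => x //= [[k /= kn Fk] Fn].
  have := tF k n I I (ex_intro _ x (conj Fk Fn)).
  by move=> ekn; rewrite ekn ltnn in kn.
Qed.

Lemma dom_ca (d : measure_display) (X : measurableType d) (R : realType)
  (mu nu : set X -> R) (C : R) (hmu : fin_additive mu) (pmu : positive_measure mu)
  (hnu : fin_additive nu) (cnu : count_additive nu)
  (hle : forall E, measurable E -> mu E <= C * nu E) : count_additive mu.
Proof.
move=> F mF tF.
set U := \bigcup_k F k.
set G := fun n => \big[setU/set0]_(k < n) F k.
have mU : measurable U by exact: bigcupT_measurable.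
have mG : forall n, measurable (G n) by move=> n; exact: bigsetU_measurable.
have GU : forall n, G n `<=` U.
  by move=> n x; rewrite /G -bigcup_mkord => -[k _ Fk]; exists k.
have dec : forall (la : set X -> R), fin_additive la -> forall n,
    la U = \sum_(k < n) la (F k) + la (U `\` G n).
  move=> la hla n.
  rewrite -{1}(setDUK (GU n)) hla.2 //.
  - by rewrite fa_bigU.
  - exact: measurableD.
  - by apply/seteqP; split => x //= [Gx [_ nGx]].
have eq : (fun n => \sum_(k < n) mu (F k)) = (fun n => mu U - mu (U `\` G n)).
  by apply: funext => n; rewrite (dec mu hmu n) addrK.
rewrite eq -[X in _ --> X](subr0 (mu U)).
apply: cvgB; first exact: cvg_cst.
apply: (@squeeze_cvgr _ _ _ _ (fun=> 0) (fun n => C * (nu U - \sum_(k < n) nu (F k)))).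
- apply: nearW => n; apply/andP; split; first exact/pmu/measurableD.
  by rewrite (dec nu hnu n) addrC addKr; apply: hle; exact: measurableD.
- exact: (@cvg_cst R^o (0:R) nat \oo _).
- idtac.
  have H : (fun n => nu U - \sum_(k < n) nu (F k)) @ \oo --> nu U - nu U.
    exact: (cvgB (cvg_cst (nu U)) (cnu F mF tF)).
  have H2 := cvgMl_tmp (a:=C) H.
  rewrite subrr mulr0 in H2.
  apply: H2.
Qed.

Lemma cvg_bigsum (R : realType) (I : Type) (s : seq I) (f : I -> nat -> R) (l : I -> R) :
  (forall i, f i @ \oo --> l i) ->
  (fun n => \sum_(i <- s) f i n) @ \oo --> \sum_(i <- s) l i.
Proof.
move=> h; elim: s => [|a s IH].
  rewrite big_nil; under eq_fun do rewrite big_nil; exact: cvg_cst.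
rewrite big_cons; under eq_fun do rewrite big_cons.
exact: cvgD.
Qed.

Theorem corollary4p1 (d : measure_display) (X : measurableType d) (R : realType)
  (hinf : infinite_set [set: X])
  (hsingle : forall x : X, measurable [set x])
  (p : X -> set X -> R) (hp : transition_function p)
  (m : nat) (mu : 'I_m -> set X -> R) (hK : measure_cycle p mu) :
  (forall i, count_additive (mu i)) <-> count_additive (mean_measure mu).
Proof.
case: hK => m0 [hfp _].
have mn0 : (m%:R : R) != 0 by rewrite pnatr_eq0 -lt0n.
split.
- move=> hca F mF tF.
  rewrite /mean_measure.
  have -> : (fun n => \sum_(k < n) (m%:R^-1 * \sum_(k0 < m) mu k0 (F k))) =
            (fun n => m%:R^-1 * \sum_(i < m) \sum_(k < n) mu i (F k)).
    by apply: funext => n; rewrite -big_distrr /= exchange_big.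
  apply: cvgMl_tmp.
  apply: cvg_bigsum => i; exact: hca.
- move=> hmean i.
  apply: (@dom_ca _ _ _ (mu i) (mean_measure mu) (m%:R)).
  + exact: (hfp i).1.
  + exact: (hfp i).2.
  + split.
      by rewrite /mean_measure big1 ?mulr0 // => k _; rewrite (hfp k).1.1.
    move=> A B mA mB AB; rewrite /mean_measure -mulrDr -big_split /=.
    by congr (_ * _); apply: eq_bigr => k _; rewrite (hfp k).1.2.
  + exact: hmean.
  + move=> E mE; rewrite /mean_measure mulrA mulfV // mul1r.
    rewrite (bigD1 i) //= lerDl; apply: sumr_ge0 => k _; exact: (hfp k).2.
Qed.
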